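(* Let $\mathscr Q_n$ be a non-singular quadric in $\mathrm{PG}(n,2)$ of projective index $g\ge1$, let $0\le s<g$, let $\alpha_s$ be an $s$-dimensional subspace contained in $\mathscr Q_n$, and let $\Gamma_s$ be the graph constructed from $\alpha_s$ as described below. If $\mathcal C$ is a clique of $\Gamma_s$ with $2^{g+1}-1$ vertices containing no vertex of type (iii), then $\mathcal C$ is the point set of a generator of $\mathscr Q_n$ containing $\alpha_s$.
   Context: A non-singular quadric $\mathscr Q_n$ in $\mathrm{PG}(n,2)$ is the point set of a non-degenerate quadric; its projective index $g$ is the largest dimension of a projective subspace contained in $\mathscr Q_n$, and the $g$-dimensional subspaces contained in $\mathscr Q_n$ are its generators. The point-graph $\Gamma$ has vertex set the points of $\mathscr Q_n$, two distinct points adjacent iff the line joining them is contained in $\mathscr Q_n$. A point $X$ of $\mathscr Q_n$ has type (i) if $X\in\alpha_s$; type (ii) if $X\notin\alpha_s$ and $\langle\alpha_s,X\rangle\subseteq\mathscr Q_n$; type (iii) otherwise. Let $\mathcal X_s$ be the type (ii) points and $\mathcal Y_s$ the points of type (i) or (iii). The graph $\Gamma_s$ has the same vertex set as $\Gamma$ and the same edges, except that for each vertex $R\in\mathcal Y_s$ having exactly $\frac12|\mathcal X_s|$ neighbours in $\mathcal X_s$ (in $\Gamma$), those edges are deleted and $R$ is joined instead to the other $\frac12|\mathcal X_s|$ vertices of $\mathcal X_s$. *)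

(* Defs.v *)
(* PG(n,2) = nonzero row vectors of 'rV['F_2]_(n.+1). *)
From mathcomp Require Import all_boot all_order all_algebra.
Set Implicit Arguments. Unset Strict Implicit. Unset Printing Implicit Defensive.
Import GRing.Theory.
Local Open Scope ring_scope.

Section Quadric.
Variable n : nat.
Notation vec := 'rV['F_2]_(n.+1).

(* quadratic form Q(x) = x A x^T (every quadratic form over F_2 arises so) *)
Definition qf (A : 'M['F_2]_(n.+1)) (x : vec) : 'F_2 := (x *m A *m x^T) 0 0.

Definition polar A (x y : vec) : 'F_2 := qf A (x + y) - qf A x - qf A y.

Definition nonsingular A : Prop :=
  forall v : vec, v != 0 -> qf A v = 0 -> exists w : vec, polar A v w != 0.

Definition on_quadric A (x : vec) : bool := (x != 0) && (qf A x == 0).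

Definition tsing A m (U : 'M['F_2]_(m, n.+1)) : bool :=
  [forall v : vec, (v <= U)%MS ==> (qf A v == 0)].

(* projective index g: largest projective dimension of a subspace in Q *)
Definition proj_index A (g : nat) : Prop :=
  (exists U : 'M['F_2]_(n.+1), \rank U = g.+1 /\ tsing A U) /\
  (forall U : 'M['F_2]_(n.+1), tsing A U -> (\rank U <= g.+1)%N).

Definition pts m (U : 'M['F_2]_(m, n.+1)) : {set vec} :=
  [set v : vec | (v != 0) && (v <= U)%MS].

(* adjacency in the point graph Gamma: line x, y, x+y contained in Q *)
Definition adj A (x y : vec) : bool :=
  [&& on_quadric A x, on_quadric A y, x != y & qf A (x + y) == 0].

(* types relative to alpha_s (spanned by S) *)
Definition type_i (S : 'M['F_2]_(n.+1)) (X : vec) : bool := (X <= S)%MS.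
Definition type_ii A (S : 'M['F_2]_(n.+1)) (X : vec) : bool :=
  [&& on_quadric A X, ~~ (X <= S)%MS & tsing A (S + X)%MS].
Definition type_iii A S X : bool :=
  [&& on_quadric A X, ~~ type_i S X & ~~ type_ii A S X].

Definition Xs A S : {set vec} := [set X | type_ii A S X].
Definition Ys A S : {set vec} := [set X | on_quadric A X && ~~ type_ii A S X].

Definition special A S (R : vec) : bool :=
  (R \in Ys A S) && ((#|[set X in Xs A S | adj A R X]|).*2 == #|Xs A S|)%N.

Definition flip A S (x y : vec) : bool :=
  (special A S x && (y \in Xs A S)) || (special A S y && (x \in Xs A S)).

Definition adj_s A S (x y : vec) : bool :=
  [&& on_quadric A x, on_quadric A y, x != y & adj A x y (+) flip A S x y].

Definition clique_s A S (C : {set vec}) : Prop :=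
  (forall x, x \in C -> on_quadric A x) /\
  (forall x y, x \in C -> y \in C -> x != y -> adj_s A S x y).

End Quadric.

(* Main.v *)
Require Import Defs.
From mathcomp Require Import all_boot all_order all_algebra.
From mathcomp Require Import ring.
Set Implicit Arguments. Unset Strict Implicit. Unset Printing Implicit Defensive.
Import GRing.Theory.
Local Open Scope ring_scope.

Lemma F2_add (x : 'F_2) : x + x = 0.
Proof. by apply/val_inj; case: x => [[|[|k]] Hk]. Qed.

Lemma vec_add (n : nat) (x : 'rV['F_2]_n) : x + x = 0.
Proof. by apply/matrixP => i j; rewrite !mxE F2_add. Qed.

Section S.
Variable n : nat.
Variable A : 'M['F_2]_(n.+1).
Notation vec := 'rV['F_2]_(n.+1).

Lemma qf_tr (x y : vec) : (y *m A *m x^T) 0 0 = (x *m A^T *m y^T) 0 0.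
Proof.
have -> : (y *m A *m x^T) 0 0 = ((y *m A *m x^T)^T) 0 0 by rewrite [RHS]mxE.
by rewrite !trmx_mul !trmxK mulmxA.
Qed.

Lemma entryD m p (M N : 'M['F_2]_(m, p)) i j : (M + N) i j = M i j + N i j.
Proof. by rewrite mxE. Qed.

Lemma polarE (x y : vec) : polar A x y = (x *m (A + A^T) *m y^T) 0 0.
Proof.
rewrite /polar /qf linearD /= !(mulmxDl, mulmxDr) !entryD (qf_tr x y).
set a := (x *m A *m x^T) 0 0; set b := (y *m A *m y^T) 0 0.
set c := (x *m A *m y^T) 0 0; set d := (x *m A^T *m y^T) 0 0.
by rewrite -/a -/b -/c -/d; ring.
Qed.

Lemma polarC (x y : vec) : polar A x y = polar A y x.
Proof. rewrite /polar [y + x]addrC; ring. Qed.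

Lemma tsingP m (M : 'M_(m, n.+1)) v : tsing A M -> (v <= M)%MS -> qf A v = 0.
Proof. by move=> /forallP /(_ v) /implyP H /H /eqP. Qed.

Lemma ts_polar m (M : 'M_(m, n.+1)) v w : tsing A M -> (v <= M)%MS -> (w <= M)%MS ->
  polar A v w = 0.
Proof.
move=> T Hv Hw; rewrite /polar (tsingP T Hv) (tsingP T Hw) (tsingP T (addmx_sub Hv Hw)).
by rewrite !subr0.
Qed.

Lemma qf0 : qf A 0 = 0.
Proof. by rewrite /qf !mul0mx mxE. Qed.

Lemma qfZ c (x : vec) : qf A (c *: x) = c * c * qf A x.
Proof. by rewrite /qf -!scalemxAl linearZ /= -scalemxAr !mxE mulrA. Qed.

Lemma ts_rows m (M : 'M_(m, n.+1)) :
  (forall i, qf A (row i M) = 0) ->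
  (forall i j, polar A (row i M) (row j M) = 0) -> tsing A M.
Proof.
move=> Hq Hp.
have HM : M *m (A + A^T) *m M^T = 0.
  apply/matrixP => i j; rewrite [RHS]mxE -(Hp i j) polarE tr_row -row_mul.
  rewrite !mxE; apply: eq_bigr => k _; rewrite !mxE //.
have Hpol v w : (v <= M)%MS -> (w <= M)%MS -> polar A v w = 0.
  move=> /submxP [a ->] /submxP [b ->].
  by rewrite polarE trmx_mul !mulmxA -(mulmxA a) -(mulmxA a) HM mulmx0 mul0mx mxE.
apply/forallP => v; apply/implyP => /submxP [a ->].
rewrite mulmx_sum_row.
set w := (\sum_i _)%R.
suff: (w <= M)%MS && (qf A w == 0) by case/andP.
apply: (big_ind (fun v => (v <= M)%MS && (qf A v == 0))).
- by rewrite sub0mx qf0 eqxx.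
- move=> x y /andP [Hx /eqP qx] /andP [Hy /eqP qy]; rewrite addmx_sub //=.
  have := Hpol _ _ Hx Hy; rewrite /polar qx qy !subr0 => ->; by [].
- move=> i _; rewrite scalemx_sub ?row_sub //= qfZ Hq mulr0 eqxx //.
Qed.
Lemma card_pts m (M : 'M['F_2]_(m, n.+1)) : (#|pts M|.+1 <= 2 ^ \rank M)%N.
Proof.
have -> : (#|pts M|.+1 = #|0%R |: pts M|)%N by rewrite cardsU1 !inE eqxx.
have S1 : 0 |: pts M \subset [set (fun w : 'rV['F_2]_(\rank M) => w *m row_base M) x | x in setT].
  apply/subsetP => v; rewrite !inE => /orP [/eqP -> | /andP [_ Hv]].
    by apply/imsetP; exists 0; rewrite ?inE // mul0mx.
  move: Hv; rewrite -(eq_row_base M) => /submxP [w ->].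
  by apply/imsetP; exists w; rewrite ?inE.
apply: (leq_trans (subset_leq_card S1)); apply: (leq_trans (leq_imset_card _ _)).
by rewrite cardsT card_mx card_Fp // mul1n.
Qed.
Lemma rank_bound g m (M : 'M['F_2]_(m, n.+1)) :
  proj_index A g -> tsing A M -> (\rank M <= g.+1)%N.
Proof.
move=> [_ H] T; have := H <<M>>%MS; rewrite genmxE; apply.
by apply/forallP => v; rewrite genmxE; exact: (forallP T v).
Qed.
End S.

From mathcomp Require Import zify.

Theorem lemma5p2 (n : nat) (A : 'M['F_2]_(n.+1)) (g s : nat)
    (S : 'M['F_2]_(n.+1)) (C : {set 'rV['F_2]_(n.+1)}) :
  nonsingular A -> proj_index A g -> (1 <= g)%N -> (s < g)%N ->
  \rank S = s.+1 -> tsing A S ->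
  clique_s A S C -> #|C| = (2 ^ g.+1 - 1)%N ->
  (forall X, X \in C -> ~ type_iii A S X) ->
  exists U : 'M['F_2]_(n.+1),
    [/\ \rank U = g.+1, tsing A U, (S <= U)%MS & C = pts U].
Proof.
move=> _ PI _ _ _ TS [Con Ccl] HC Hn3.
have HCi x : x \in C -> (x <= S)%MS || type_ii A S x.
  move=> Hx; case/boolP: (x <= S)%MS => //= HS; case/boolP: (type_ii A S x) => // Ht.
  by exfalso; apply: (Hn3 x Hx); rewrite /type_iii Con //= /type_i HS.
have Hspec x y : x \in C -> y \in Xs A S -> special A S x = false.
  move=> Hx Hy; apply/negbTE/negP => /andP [HY /eqP H2].
  move: HY; rewrite inE => /andP [_ Hnt].
  have HxS : (x <= S)%MS by move: (HCi x Hx); rewrite (negbTE Hnt) orbF.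
  have E : [set X in Xs A S | adj A x X] = Xs A S.
    apply/setP => X; rewrite !inE; case HX: (type_ii A S X) => //=.
    move: (HX) => /and3P [HoX HnS HtX].
    rewrite /adj Con //= HoX /=; apply/andP; split.
      by apply/eqP => E; move: HnS; rewrite -E HxS.
    apply/eqP; apply: (tsingP HtX); apply: addmx_sub.
      exact: submx_trans HxS (addsmxSl S X).
    exact: addsmxSr.
  rewrite E in H2.
  have : (0 < #|Xs A S|)%N by apply/card_gt0P; exists y.
  rewrite -addnn in H2; lia.
have Hadj x y : x \in C -> y \in C -> x != y -> adj A x y.
  move=> Hx Hy Hne; case/and4P: (Ccl x y Hx Hy Hne) => _ _ _.
  have -> : flip A S x y = false.
    rewrite /flip; case/boolP: (y \in Xs A S) => Hy'; [rewrite (Hspec x y Hx Hy') | rewrite andbF];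
    case/boolP: (x \in Xs A S) => Hx'; rewrite ?(Hspec y x Hy Hx') ?andbF //.
  by rewrite addbF.
have qC x : x \in C -> qf A x = 0 by move=> /Con /andP [_ /eqP].
have pol0 x y : x \in C -> y \in C -> polar A x y = 0.
  move=> Hx Hy; case/boolP: (x == y) => [/eqP <- | Hne].
    by rewrite /polar vec_add qf0 qC // !subr0.
  have := Hadj x y Hx Hy Hne; case/and4P => _ _ _ /eqP H.
  by rewrite /polar H !qC // !subr0.
have PS v w : (v <= S)%MS -> w \in C -> polar A v w = 0.
  move=> Hv Hw; case/orP: (HCi w Hw) => [HwS | /and3P [_ _ Ht]].
    exact: ts_polar TS Hv HwS.
  apply: (ts_polar Ht); [exact: submx_trans Hv (addsmxSl S w) | exact: addsmxSr].
set sC := enum C.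
set U0 := \matrix_(i < size sC) nth 0 sC i.
have rowU i : row i U0 = nth 0 sC i by rewrite rowK.
have rowC i : row i U0 \in C by rewrite rowU -mem_enum mem_nth.
have subU x : x \in C -> (x <= U0)%MS.
  move=> Hx; have Hi : (index x sC < size sC)%N by rewrite index_mem mem_enum.
  by rewrite -(nth_index 0 (_ : x \in sC)) ?mem_enum // -(rowU (Ordinal Hi)) row_sub.
have TU : tsing A U0.
  by apply: ts_rows => [i | i j]; [rewrite qC | rewrite pol0].
have r1 := rank_bound PI TU.
have Csub : C \subset pts U0.
  by apply/subsetP => x Hx; rewrite inE subU // andbT; case/andP: (Con x Hx).
have c1 := subset_leq_card Csub.
have c2 := card_pts U0.
have e1 : (2 ^ \rank U0 <= 2 ^ g.+1)%N by rewrite leq_exp2l.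
have e0 : (0 < 2 ^ g.+1)%N by rewrite expn_gt0.
have Er : (2 ^ \rank U0 = 2 ^ g.+1)%N by move: c1 c2 e1 e0 HC; move: (2 ^ g.+1)%N (2 ^ \rank U0)%N => k k2; lia.
have rU : \rank U0 = g.+1 by apply/eqP; rewrite -(eqn_exp2l _ _ (isT : 1 < 2)%N) Er.
have CU : C = pts U0.
  apply/eqP; rewrite eqEcard Csub /=; move: c2 e0 HC; rewrite Er; move: (2 ^ g.+1)%N => k h1 h2 ->; by rewrite subn1 -ltnS prednK.
have T2 : tsing A (col_mx S U0).
  have good i : ((row i (col_mx S U0) <= S)%MS /\ True) \/ (row i (col_mx S U0) \in C).
    case: (split_ordP i) => k0 ->; [rewrite rowKu; left; split; [exact: row_sub|by []] | rewrite rowKd; right; exact: rowC].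
  apply: ts_rows => [i | i j].
    by case: (good i) => [[H _] | H]; [exact: tsingP TS H | exact: qC].
  case: (good i) => [[Hi _] | Hi]; case: (good j) => [[Hj _] | Hj].
  - exact: ts_polar TS Hi Hj.
  - exact: PS.
  - rewrite polarC; exact: PS.
  - exact: pol0.
have r2 := rank_bound PI T2.
have SU : (S <= U0)%MS.
  have L := mxrank_leqif_sup (addsmxSr S U0).
  have : (S + U0 <= U0)%MS.
    case: L => L1 L2; rewrite -L2 eqn_leq L1 rU /=.
    by rewrite (addsmxE S U0).
  exact: submx_trans (addsmxSl S U0).
exists (<<U0>>%MS : 'M_(n.+1)); split.
- by rewrite genmxE.
- by apply/forallP => v; rewrite genmxE; exact: (forallP TU v).
- by rewrite genmxE.
- by rewrite CU; apply/setP => v; rewrite !inE genmxE.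
Qed.
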